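(* Let $k\ge 2$ be an even integer, and let $S_k$ and $\mathcal D$ be as defined in the context. Let $T$ be a minimum-length $\mathcal D$-monotone geometric spanning tree of $S_k$, and let $x$ be a polygon vertex (i.e. $x\in S_k\setminus\{o\}$). Then $\deg_T(x)\le 2$.
   Context: Let $k\ge 2$ be even. Let $\mathcal D=\{d_1,\dots,d_k\}$ where $d_i=(\cos((i-1)\pi/k),\sin((i-1)\pi/k))$, so consecutive directions differ by angle $\pi/k$. The lines through the origin $o$ orthogonal to the $d_i$ partition the plane into $2k$ wedges $W_0,\dots,W_{2k-1}$, where (since $k$ is even) $W_i$ is the wedge of polar angles in $[i\pi/k,(i+1)\pi/k]$. Let $S_k=\{o\}\cup\{v_0,\dots,v_{2k-1}\}$, where $v_i$ is the point on the unit circle at polar angle $i\pi/k+\frac{2\pi}{3k}$ (the second angle-trisector of $W_i$ in counterclockwise order); thus $v_0,\dots,v_{2k-1}$ form a regular $2k$-gon centered at $o$, and these are called polygon vertices. A geometric path $\langle p_1,\dots,p_r\rangle$ is $d$-monotone if no two of its vertices lie on a common line orthogonal to $d$ and $\langle p_1,d\rangle,\dots,\langle p_r,d\rangle$ is strictly increasing or strictly decreasing. A geometric spanning tree of $S$ is a tree with vertex set $S$ whose edges are straight segments; its length is the sum of Euclidean edge lengths; it is $\mathcal D$-monotone if for every pair of vertices $u,v$ there is $d\in\mathcal D$ with the tree path from $u$ to $v$ $d$-monotone. *)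

(* Defs.v *)
From Stdlib Require Import Reals.
From mathcomp Require Import all_boot.

Set Implicit Arguments.
Unset Strict Implicit.
Unset Printing Implicit Defensive.

Local Open Scope R_scope.

(* Vertices of S_k are indexed by 'I_(2k+1):
   index i < 2k  is the polygon vertex v_i (polar angle i*pi/k + 2pi/(3k)),
   index 2k      is the origin o. *)
Definition vtx (k : nat) := ordinal (2 * k)%N.+1.

Definition pt := (R * R)%type.

Definition pos (k : nat) (i : vtx k) : pt :=
  if (nat_of_ord i < 2 * k)%N then
    let th := INR i * PI / INR k + 2 * PI / (3 * INR k) in (cos th, sin th)
  else (0, 0).

(* Direction d_{j+1} = (cos (j pi/k), sin (j pi/k)), for j < k. *)
Definition dir (k j : nat) : pt := (cos (INR j * PI / INR k), sin (INR j * PI / INR k)).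

Definition dot (p q : pt) : R := fst p * fst q + snd p * snd q.

Definition dist (p q : pt) : R :=
  sqrt ((fst p - fst q) ^ 2 + (snd p - snd q) ^ 2).

Fixpoint strict_incr (l : list R) : Prop :=
  match l with
  | a :: ((b :: _) as t) => a < b /\ strict_incr t
  | _ => True
  end.

Fixpoint strict_decr (l : list R) : Prop :=
  match l with
  | a :: ((b :: _) as t) => a > b /\ strict_decr t
  | _ => True
  end.

Definition d_monotone (d : pt) (ps : list pt) : Prop :=
  (forall i j, (i < size ps)%N -> (j < size ps)%N -> i <> j ->
     dot (nth (0,0) ps i) d <> dot (nth (0,0) ps j) d) /\
  (strict_incr (map (fun p => dot p d) ps) \/
   strict_decr (map (fun p => dot p d) ps)).

Definition is_tree (T : finType) (E : rel T) : Prop :=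
  symmetric E /\ irreflexive E /\
  (forall u v : T, connect E u v) /\
  ~ (exists c : seq T, [/\ uniq c, (2 < size c)%N & cycle E c]).

(* p (with u prepended) is a simple path from u to v in E; in a tree this is
   the (unique) tree path from u to v. *)
Definition simple_path (T : finType) (E : rel T) (u v : T) (p : seq T) : Prop :=
  path E u p /\ last u p = v /\ uniq (u :: p).

Definition D_monotone_tree (k : nat) (E : rel (vtx k)) : Prop :=
  is_tree E /\
  forall u v : vtx k, exists j : nat, (j < k)%N /\
    forall p : seq (vtx k), simple_path E u v p ->
      d_monotone (dir k j) (map (@pos k) (u :: p)).

Definition tree_length (k : nat) (E : rel (vtx k)) : R :=
  \big[Rplus/0]_(u : vtx k)
    \big[Rplus/0]_(v : vtx k | (nat_of_ord u < nat_of_ord v)%N && E u v)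
       dist (pos u) (pos v).

Definition min_D_monotone_tree (k : nat) (E : rel (vtx k)) : Prop :=
  D_monotone_tree E /\
  forall E' : rel (vtx k), D_monotone_tree E' -> tree_length E <= tree_length E'.

Definition degree (T : finType) (E : rel T) (x : T) : nat := #|[set y | E x y]|.

(* Main.v *)
Require Import Defs.
From Stdlib Require Import Reals.
From Stdlib Require Import ZArith Lia Lra Classical.
From mathcomp Require Import all_boot.
From mathcomp Require Import zify.

Module A1m.
Local Open Scope Z_scope.

Definition cposP (h c t : Z) : Prop := let d := c - t in (-h <= d <= h-1) \/ 3*h <= d \/ d <= -3*h-1.
Definition cposb (h c t : Z) : bool :=
  let d := c - t in ((-h <=? d) && (d <=? h-1)) || (3*h <=? d) || (d <=? -3*h-1).
Lemma cposbP h c t : cposb h c t = true <-> cposP h c t.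
Proof. unfold cposb, cposP. rewrite !Bool.orb_true_iff Bool.andb_true_iff !Z.leb_le. tauto. Qed.
Lemma cposbF h c t : cposb h c t = false <-> ~ cposP h c t.
Proof. rewrite -cposbP. destruct (cposb h c t); split; congruence. Qed.

Definition cellPP (h p q : Z) : Z :=
  let qq := if p <? q then q else q + 4*h in
  let c := h + (p + qq + 1)/2 in if 4*h <=? c then c - 4*h else c.
Definition cellPO (h p : Z) : Z := if p <? 2*h then p + 2*h else p - 2*h.
Definition ridx (h i p : Z) := if i <=? p then p - i else p + 4*h - i.
Definition flip (h t : Z) := if t <? 2*h then t + 2*h else t - 2*h.

Definition rcellZ (h i : Z) (oy oz : option Z) : Z :=
  match oy, oz with
  | None, Some q => ridx h i q
  | Some p, None => cellPO h (ridx h i p)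
  | Some p, Some q => cellPP h (ridx h i p) (ridx h i q)
  | None, None => 0
  end.

Lemma cellPP_spec h p q : 1 <= h -> 0 <= p < 4*h -> 0 <= q < 4*h -> p <> q ->
  exists m, 2*m <= p + (if p <? q then q else q + 4*h) + 1 < 2*m+2 /\
   cellPP h p q = if 4*h <=? h+m then h+m-4*h else h+m.
Proof. intros. exists ((p + (if p <? q then q else q + 4*h) + 1)/2). split.
 Z.div_mod_to_equations; lia. reflexivity. Qed.

Lemma ridx_spec h i x : 0 <= i < 4*h -> 0 <= x < 4*h ->
  0 <= ridx h i x < 4*h /\ (ridx h i x = x - i \/ ridx h i x = x + 4*h - i).
Proof. intros; unfold ridx; destruct (Z.leb_spec i x); lia. Qed.

Lemma ridx_inj h i x y : 0 <= i < 4*h -> 0 <= x < 4*h -> 0 <= y < 4*h -> x <> y -> ridx h i x <> ridx h i y.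
Proof. intros. destruct (ridx_spec h i x); auto. destruct (ridx_spec h i y); auto. lia. Qed.

Lemma cellPP_range h p q : 1 <= h -> 0 <= p < 4*h -> 0 <= q < 4*h -> p <> q -> 0 <= cellPP h p q < 4*h.
Proof. intros. destruct (cellPP_spec h p q) as [m [Hm ->]]; try lia.
  revert Hm. destruct (Z.ltb_spec p q); destruct (Z.leb_spec (4*h) (h+m)); lia. Qed.

Lemma cellPO_range h p : 1 <= h -> 0 <= p < 4*h -> 0 <= cellPO h p < 4*h.
Proof. intros; unfold cellPO; destruct (Z.ltb_spec p (2*h)); lia. Qed.

Lemma flip_spec h t : 1 <= h -> 0 <= t < 4*h -> 0 <= flip h t < 4*h /\
  forall c, 0 <= c < 4*h -> (cposP h c (flip h t) <-> ~ cposP h c t).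
Proof. intros. unfold flip, cposP. destruct (Z.ltb_spec t (2*h)); split; try lia; intros; lia. Qed.

Lemma revPP h p q t : 1 <= h -> 0 <= p < 4*h -> 0 <= q < 4*h -> p <> q -> 0 <= t < 4*h ->
  (cposP h (cellPP h q p) t <-> ~ cposP h (cellPP h p q) t).
Proof. intros.
  destruct (cellPP_spec h p q) as [m [Hm ->]]; try lia.
  destruct (cellPP_spec h q p) as [m' [Hm' ->]]; try lia.
  revert Hm Hm'. unfold cposP.
  destruct (Z.ltb_spec p q); destruct (Z.ltb_spec q p);
  destruct (Z.leb_spec (4*h) (h+m)); destruct (Z.leb_spec (4*h) (h+m')); intros; lia.
Qed.

Lemma revPO h p t : 1 <= h -> 0 <= p < 4*h -> 0 <= t < 4*h ->
  (cposP h p t <-> ~ cposP h (cellPO h p) t).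
Proof. intros. unfold cposP, cellPO. destruct (Z.ltb_spec p (2*h)); lia. Qed.

Lemma signPP h i p q j : 1 <= h -> 0 <= i < 4*h -> 0 <= p < 4*h -> 0 <= q < 4*h -> p <> q -> 0 <= j < 2*h ->
  (cposP h (cellPP h (ridx h i p) (ridx h i q)) (ridx h i j) <->
  (((0 < 3*(p+q)+4-6*j < 12*h) /\ q < p) \/ ((3*(p+q)+4-6*j < 0 \/ 12*h < 3*(p+q)+4-6*j) /\ p < q))).
Proof. intros.
  destruct (ridx_spec h i p) as [Hp1 Hp2]; try lia. destruct (ridx_spec h i q) as [Hq1 Hq2]; try lia.
  destruct (ridx_spec h i j) as [Ht1 Ht2]; try lia.
  assert (ridx h i p <> ridx h i q) by lia.
  destruct (cellPP_spec h (ridx h i p) (ridx h i q)) as [m' [Hm' ->]]; try lia.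
  assert (Hm: 2*((p+q+1)/2) <= p + q + 1 < 2*((p+q+1)/2)+2) by (Z.div_mod_to_equations; lia).
  revert Hm Hm'. unfold cposP.
  set (a := ridx h i p) in *. set (b := ridx h i q) in *. set (c := ridx h i j) in *.
  set (m := (p+q+1)/2).
  destruct (Z.ltb_spec a b);
  destruct (Z.leb_spec (4*h) (h+m')); intros; lia.
Qed.

Lemma signOP h i q j : 1 <= h -> 0 <= i < 4*h -> 0 <= q < 4*h -> 0 <= j < 2*h ->
  (cposP h (ridx h i q) (ridx h i j) <->
   (0 < 6*(q-j)+4+6*h < 12*h \/ 24*h < 6*(q-j)+4+6*h < 36*h)) /\
  (~ cposP h (ridx h i q) (ridx h i j) <->
   (-12*h < 6*(q-j)+4+6*h < 0 \/ 12*h < 6*(q-j)+4+6*h < 24*h)).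
Proof. intros.
  destruct (ridx_spec h i q) as [Hq1 Hq2]; try lia. destruct (ridx_spec h i j) as [Ht1 Ht2]; try lia.
  unfold cposP. split; lia. Qed.

Lemma signPO h i p j : 1 <= h -> 0 <= i < 4*h -> 0 <= p < 4*h -> 0 <= j < 2*h ->
  (cposP h (cellPO h (ridx h i p)) (ridx h i j) <->
   (-12*h < 6*(p-j)+4+6*h < 0 \/ 12*h < 6*(p-j)+4+6*h < 24*h)) /\
  (~ cposP h (cellPO h (ridx h i p)) (ridx h i j) <->
   (0 < 6*(p-j)+4+6*h < 12*h \/ 24*h < 6*(p-j)+4+6*h < 36*h)).
Proof. intros.
  destruct (ridx_spec h i p) as [Hq1 Hq2]; try lia. destruct (ridx_spec h i j) as [Ht1 Ht2]; try lia.
  unfold cposP, cellPO. destruct (Z.ltb_spec (ridx h i p) (2*h)); split; lia. Qed.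

End A1m.
Import A1m.

Module A2m.
Open Scope R_scope.

Lemma lt_PI_helper (a b : R) : 0 < b -> 0 < a < b -> 0 < a * (PI / b) < PI.
Proof. intros Hb [H1 H2]. pose proof PI_RGT_0.
  set (v := PI / b). assert (Hv: PI = b * v) by (unfold v; field; lra).
  assert (0 < v) by (unfold v; apply Rdiv_lt_0_compat; lra).
  rewrite Hv. split; nra. Qed.

Lemma sin_sign (h n : Z) : (1 <= h)%Z ->
  (((0 < n < 12*h) \/ (24*h < n < 36*h))%Z -> 0 < sin (IZR n * (PI / IZR (12*h)))) /\
  (((-12*h < n < 0) \/ (12*h < n < 24*h))%Z -> sin (IZR n * (PI / IZR (12*h))) < 0).
Proof. intros Hh. pose proof PI_RGT_0.
  assert (H12: 0 < IZR (12*h)) by (apply IZR_lt; lia).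
  assert (Hu: forall m, IZR m * (PI / IZR (12*h)) + PI = IZR (m + 12*h) * (PI / IZR (12*h))).
  { intro m. rewrite plus_IZR !mult_IZR. field. apply not_0_IZR; lia. }
  split.
  - intros [Hn|Hn].
    + apply sin_gt_0; apply lt_PI_helper; auto; split; apply IZR_lt; lia.
    + replace (IZR n * (PI / IZR (12*h))) with (IZR (n - 24*h) * (PI / IZR (12*h)) + 2 * INR 1 * PI).
      2:{ rewrite minus_IZR !mult_IZR. simpl INR. field. apply not_0_IZR; lia. }
      rewrite sin_period. apply sin_gt_0; apply lt_PI_helper; auto; split; apply IZR_lt; lia.
  - intros [Hn|Hn].
    + replace (IZR n * (PI / IZR (12*h))) with (- (IZR (- n) * (PI / IZR (12*h)))).
      2:{ rewrite opp_IZR. ring. }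
      rewrite sin_neg. assert (0 < sin (IZR (- n) * (PI / IZR (12*h)))); [|lra].
      apply sin_gt_0; apply lt_PI_helper; auto; split; apply IZR_lt; lia.
    + replace (IZR n * (PI / IZR (12*h))) with (IZR (n - 12*h) * (PI / IZR (12*h)) + PI).
      2:{ rewrite minus_IZR !mult_IZR. field. apply not_0_IZR; lia. }
      rewrite neg_sin. assert (0 < sin (IZR (n - 12*h) * (PI / IZR (12*h)))); [|lra].
      apply sin_gt_0; apply lt_PI_helper; auto; split; apply IZR_lt; lia.
Qed.

End A2m.
Import A2m.

Module A7m.
Local Open Scope Z_scope.

Lemma AL1 h a1 a2 c1 c2 t : 1 <= h ->
  h+1 <= a1 <= 3*h -> h+1 <= a2 <= 3*h -> h+1 <= c1 <= 3*h -> h+1 <= c2 <= 3*h -> 0 <= t < 4*h ->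
  cposP h a1 t -> cposP h a2 t -> ~ cposP h c1 t -> ~ cposP h c2 t ->
  (c1 < a1 /\ c1 < a2 /\ c2 < a1 /\ c2 < a2) \/ (c1 > a1 /\ c1 > a2 /\ c2 > a1 /\ c2 > a2).
Proof. unfold cposP. intros. lia. Qed.

Lemma AL2 h mlo mhi sb e t t' : 1 <= h -> h+2 <= mlo -> mlo <= sb <= mhi -> mhi <= 3*h-1 ->
  0 <= e < 4*h -> 0 <= t < 4*h -> 0 <= t' < 4*h ->
  ~ cposP h (mlo-1) t -> cposP h sb t -> cposP h e t ->
  ~ cposP h (mhi+1) t' -> cposP h sb t' -> cposP h e t' -> mlo <= e <= mhi.
Proof. unfold cposP. intros. lia. Qed.

Lemma half_spec r : exists m, 2*m <= r + 1 < 2*m+2 /\ (r+1)/2 = m.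
Proof. exists ((r+1)/2). split; [Z.div_mod_to_equations; lia| reflexivity]. Qed.

Lemma AL3 h mlo mhi ry : 1 <= h -> h+2 <= mlo <= mhi -> mhi <= 3*h-1 -> 1 <= ry < 4*h ->
  ry <> 2*(mlo-h)-1 -> mlo <= h + (ry+1)/2 <= mhi ->
  mlo <= cellPP h ry (2*(mlo-h)-1) <= mhi -> False.
Proof. intros. destruct (half_spec ry) as [m [Hm Em]]. subst m.
  destruct (@cellPP_spec h ry (2*(mlo-h)-1)) as [m' [Hm' E']]; try lia. match goal with Hc : _ <= cellPP _ _ _ <= _ |- _ => rewrite E' in Hc end.
  revert Hm'. destruct (Z.ltb_spec ry (2*(mlo-h)-1)); destruct (Z.leb_spec (4*h) (h+m')); intros; lia.
Qed.

Lemma AL5 h mlo mhi ry : 1 <= h -> h+2 <= mlo <= mhi -> mhi <= 3*h-1 -> 1 <= ry < 4*h ->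
  ry <> 2*(mhi-h) -> mlo <= h + (ry+1)/2 <= mhi ->
  mlo <= cellPP h ry (2*(mhi-h)) <= mhi -> False.
Proof. intros. destruct (half_spec ry) as [m [Hm Em]]. subst m.
  destruct (@cellPP_spec h ry (2*(mhi-h))) as [m' [Hm' E']]; try lia. match goal with Hc : _ <= cellPP _ _ _ <= _ |- _ => rewrite E' in Hc end.
  revert Hm'. destruct (Z.ltb_spec ry (2*(mhi-h))); destruct (Z.leb_spec (4*h) (h+m')); intros; lia.
Qed.

Lemma AL6 h mlo mhi ry : 1 <= h -> h+2 <= mlo <= mhi -> mhi <= 2*h -> 1 <= ry < 4*h ->
  mlo <= h + (ry+1)/2 <= mhi -> mlo <= cellPO h ry <= mhi -> False.
Proof. intros. destruct (half_spec ry) as [m [Hm Em]]. subst m.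
  unfold cellPO in *. destruct (Z.ltb_spec ry (2*h)); lia. Qed.

End A7m.
Import A7m.

Set Implicit Arguments.
Unset Strict Implicit.
Unset Printing Implicit Defensive.

Module A3m.

Local Open Scope R_scope.

Ltac izr := repeat (rewrite ?minus_IZR ?plus_IZR ?mult_IZR ?opp_IZR).

Definition uu (h : nat) : R := PI / IZR (12 * Z.of_nat h).
Definition gg (k j : nat) (v : vtx k) : R := dot (Defs.pos v) (dir k j).

Lemma gg_poly (k h j : nat) (v : vtx k) : k = (2*h)%nat -> (0 < h)%nat -> (nat_of_ord v < 2*k)%N ->
  gg j v = cos (IZR (6 * Z.of_nat v + 4 - 6 * Z.of_nat j) * uu h).
Proof. intros Hk Hh Hv. unfold gg, Defs.pos, dir, dot. rewrite Hv. cbn [fst snd].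
  rewrite -cos_minus. f_equal. unfold uu.
  have Hk' : INR k = 2 * INR h by rewrite Hk mult_INR.
  rewrite minus_IZR plus_IZR !mult_IZR -!INR_IZR_INZ Hk'.
  assert (0 < INR h) by (apply lt_0_INR; apply/ltP; exact Hh).
  field. lra.
Qed.

Lemma gg_o (k j : nat) (v : vtx k) : ~~ (nat_of_ord v < 2*k)%N -> gg j v = 0.
Proof. intros Hv. unfold gg, Defs.pos, dot. rewrite (negbTE Hv). simpl. ring. Qed.

Definition vcode k (v : vtx k) : option Z :=
  if (nat_of_ord v < 2*k)%N then Some (Z.of_nat v) else None.

Lemma vtx_o_eq k (y z : vtx k) : ~~ (nat_of_ord y < 2*k)%N -> ~~ (nat_of_ord z < 2*k)%N -> y = z.
Proof. intros Hy Hz. apply val_inj. move: (ltn_ord y) (ltn_ord z) Hy Hz.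
  rewrite -!leqNgt. simpl. lia. Qed.

Lemma lt2k_Z k h (v : vtx k) : k = (2*h)%nat -> (nat_of_ord v < 2*k)%N ->
  (0 <= Z.of_nat v < 4 * Z.of_nat h)%Z.
Proof. move=> Hk Hv. lia. Qed.

Lemma trig_main (k h : nat) (i : Z) (j : nat) (y z : vtx k) :
  k = (2*h)%nat -> (0 < h)%N -> (0 <= i < 4 * Z.of_nat h)%Z -> (j < 2*h)%N -> y <> z ->
  (cposP (Z.of_nat h) (rcellZ (Z.of_nat h) i (vcode y) (vcode z)) (ridx (Z.of_nat h) i (Z.of_nat j)) ->
     gg j y < gg j z) /\
  (~ cposP (Z.of_nat h) (rcellZ (Z.of_nat h) i (vcode y) (vcode z)) (ridx (Z.of_nat h) i (Z.of_nat j)) ->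
     gg j z < gg j y).
Proof.
  move=> Hk Hh Hi Hj Hyz.
  have Hh' : (1 <= Z.of_nat h)%Z by move/ltP: Hh; lia.
  have Hj' : (0 <= Z.of_nat j < 2 * Z.of_nat h)%Z by move/ltP: Hj; lia.
  have HU := sin_sign (Z.of_nat h).
  unfold vcode.
  case Hy: (nat_of_ord y < 2*k)%N; case Hz: (nat_of_ord z < 2*k)%N.
  -
    have Hy' := lt2k_Z Hk Hy. have Hz' := lt2k_Z Hk Hz.
    have Hne : Z.of_nat y <> Z.of_nat z.
    { move=> E. apply Hyz. apply val_inj. simpl. lia. }
    cbn [rcellZ].
    rewrite (gg_poly j Hk Hh Hy) (gg_poly j Hk Hh Hz).
    set p := Z.of_nat y in Hy' Hne *. set q := Z.of_nat z in Hz' Hne *. set jj := Z.of_nat j in Hj' *.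
    have Hf : cos (IZR (6 * q + 4 - 6 * jj) * uu h) - cos (IZR (6 * p + 4 - 6 * jj) * uu h) =
       -2 * sin (IZR (3*(q-p)) * uu h) * sin (IZR (3*(p+q)+4-6*jj) * uu h).
    { rewrite form2.
      have e1 : (IZR (6 * q + 4 - 6 * jj) * uu h - IZR (6 * p + 4 - 6 * jj) * uu h) / 2 =
                IZR (3*(q-p)) * uu h.
      izr. field.
      have e2 : (IZR (6 * q + 4 - 6 * jj) * uu h + IZR (6 * p + 4 - 6 * jj) * uu h) / 2 =
                IZR (3*(p+q)+4-6*jj) * uu h by izr; field.
      by rewrite e1 e2. }
    have HS := @signPP _ _ _ _ _ Hh' Hi Hy' Hz' Hne Hj'.
    rewrite /uu in Hf.
    destruct (HU (3*(q-p))%Z Hh') as [B1 B2].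
    destruct (HU (3*(p+q)+4-6*jj)%Z Hh') as [A1 A2].
    rewrite /uu.
    split => Hc.
    + apply HS in Hc.
      destruct Hc as [[Ha Hb]|[Ha Hb]].
      * have s1 := B2 ltac:(lia). have s2 := A1 ltac:(lia). nra.
      * have s1 := B1 ltac:(lia). have s2 := A2 ltac:(lia). nra.
    + have Hc' : ~ (((0 < 3*(p+q)+4-6*jj < 12*Z.of_nat h) /\ q < p) \/
                 ((3*(p+q)+4-6*jj < 0 \/ 12*Z.of_nat h < 3*(p+q)+4-6*jj) /\ p < q))%Z
        by (move=> C; apply Hc; apply HS; exact C).
      destruct (Z.lt_total p q) as [L|[L|L]]; [|lia|].
      * have s1 := B1 ltac:(lia). have s2 := A1 ltac:(lia). nra.
      * have s1 := B2 ltac:(lia). have s2 := A2 ltac:(lia). nra.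
  -
    have Hy' := lt2k_Z Hk Hy.
    cbn [rcellZ].
    rewrite (gg_poly j Hk Hh Hy) (gg_o j (negbT Hz)).
    set p := Z.of_nat y in Hy' *. set jj := Z.of_nat j in Hj' *.
    have Hc : cos (IZR (6 * p + 4 - 6 * jj) * uu h) = sin (IZR (6*(p-jj)+4+6*Z.of_nat h) * uu h).
    { rewrite cos_sin. f_equal. rewrite /uu; izr.
      field. apply not_0_IZR. lia. }
    rewrite Hc /uu.
    destruct (HU (6*(p-jj)+4+6*Z.of_nat h)%Z Hh') as [A1 A2].
    have [S1 S2] := @signPO _ _ _ _ Hh' Hi Hy' Hj'.
    split => C.
    + have := A2 (proj1 S1 C). lra.
    + have := A1 (proj1 S2 C). lra.
  -
    have Hz' := lt2k_Z Hk Hz.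
    cbn [rcellZ].
    rewrite (gg_poly j Hk Hh Hz) (gg_o j (negbT Hy)).
    set q := Z.of_nat z in Hz' *. set jj := Z.of_nat j in Hj' *.
    have Hc : cos (IZR (6 * q + 4 - 6 * jj) * uu h) = sin (IZR (6*(q-jj)+4+6*Z.of_nat h) * uu h).
    { rewrite cos_sin. f_equal. rewrite /uu; izr.
      field. apply not_0_IZR. lia. }
    rewrite Hc /uu.
    destruct (HU (6*(q-jj)+4+6*Z.of_nat h)%Z Hh') as [A1 A2].
    have [S1 S2] := @signOP _ _ _ _ Hh' Hi Hz' Hj'.
    split => C.
    + have := A1 (proj1 S1 C). lra.
    + have := A2 (proj1 S2 C). lra.
  - exfalso. apply Hyz. apply vtx_o_eq; by rewrite ?Hy ?Hz.
Qed.

End A3m.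
Import A3m.

Module A4m.

Section Geom.
Variables (k h : nat) (i : Z).
Hypothesis Hk : k = (2*h)%nat.
Hypothesis Hh : (0 < h)%N.
Hypothesis Hi : (0 <= i < 4 * Z.of_nat h)%Z.

Definition rc (y z : vtx k) : Z := rcellZ (Z.of_nat h) i (vcode y) (vcode z).
Definition Rt (t : Z) (y z : vtx k) : bool := (y != z) && cposb (Z.of_nat h) (rc y z) t.

Lemma hz1 : (1 <= Z.of_nat h)%Z. Proof. lia. Qed.

Lemma vcode_cases (y : vtx k) :
  (vcode y = None /\ ~~ (nat_of_ord y < 2*k)%N) \/
  (vcode y = Some (Z.of_nat y) /\ (nat_of_ord y < 2*k)%N /\ (0 <= Z.of_nat y < 4 * Z.of_nat h)%Z).
Proof. rewrite /vcode. case H: (nat_of_ord y < 2*k)%N; [right|left]; split => //. split => //. lia. Qed.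

Lemma rc_range y z : y <> z -> (0 <= rc y z < 4 * Z.of_nat h)%Z.
Proof. move=> Hyz. have H1 := hz1. rewrite /rc.
  case: (vcode_cases y) => [[-> Hy]|[-> [Hy Hy']]]; case: (vcode_cases z) => [[-> Hz]|[-> [Hz Hz']]]; cbn [rcellZ].
  - exfalso; apply Hyz; exact: vtx_o_eq.
  - by apply ridx_spec.
  - apply cellPO_range => //. by apply ridx_spec.
  - have Hne : Z.of_nat y <> Z.of_nat z by move=> E; apply Hyz; apply val_inj; simpl; lia.
    apply cellPP_range => //; try by apply ridx_spec. by apply ridx_inj.
Qed.

Lemma rc_rev y z t : y <> z -> (0 <= t < 4 * Z.of_nat h)%Z ->
  (cposP (Z.of_nat h) (rc z y) t <-> ~ cposP (Z.of_nat h) (rc y z) t).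
Proof. move=> Hyz Ht. have H1 := hz1. rewrite /rc.
  case: (vcode_cases y) => [[-> Hy]|[-> [Hy Hy']]]; case: (vcode_cases z) => [[-> Hz]|[-> [Hz Hz']]]; cbn [rcellZ].
  - exfalso; apply Hyz; exact: vtx_o_eq.
  - have := @revPO _ (ridx (Z.of_nat h) i (Z.of_nat z)) t H1 ltac:(by apply ridx_spec) Ht. tauto.
  - have := @revPO _ (ridx (Z.of_nat h) i (Z.of_nat y)) t H1 ltac:(by apply ridx_spec) Ht. tauto.
  - have Hne : Z.of_nat y <> Z.of_nat z by move=> E; apply Hyz; apply val_inj; simpl; lia.
    apply revPP => //; try by apply ridx_spec. by apply ridx_inj.
Qed.

Lemma Rt_rev t y z : (0 <= t < 4 * Z.of_nat h)%Z -> Rt t z y = Rt (flip (Z.of_nat h) t) y z.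
Proof. move=> Ht. rewrite /Rt. case: (eqVneq y z) => [->|Hyz]; first by [].
  rewrite /=. have Hyz' : y <> z by apply/eqP.
  have [Hf1 Hf2] := @flip_spec _ _ hz1 Ht.
  have R := rc_range Hyz'. have R' := rc_range (nesym Hyz').
  have E1 := rc_rev Hyz' Ht. have E2 := Hf2 _ R.
  case B1: (cposb _ (rc z y) t); case B2: (cposb _ (rc y z) _) => //.
  - move/cposbP: B1. move/cposbF: B2. tauto.
  - move/cposbF: B1. move/cposbP: B2. tauto.
Qed.

Lemma Rt_flip t y z : (0 <= t < 4 * Z.of_nat h)%Z -> y <> z ->
  Rt (flip (Z.of_nat h) t) y z = ~~ Rt t y z.
Proof. move=> Ht Hyz. rewrite /Rt. have -> : (y != z) = true by apply/eqP. simpl.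
  have [Hf1 Hf2] := @flip_spec _ _ hz1 Ht. have E2 := Hf2 _ (rc_range Hyz).
  case B1: (cposb _ (rc y z) (flip _ t)); case B2: (cposb _ (rc y z) t) => //.
  - move/cposbP: B1. move/cposbP: B2. tauto.
  - move/cposbF: B1. move/cposbF: B2. tauto.
Qed.

Lemma trig_Rt (j : nat) y z : (j < 2*h)%N -> y <> z ->
  (Rt (ridx (Z.of_nat h) i (Z.of_nat j)) y z -> gg j y < gg j z) /\
  (~~ Rt (ridx (Z.of_nat h) i (Z.of_nat j)) y z -> gg j z < gg j y).
Proof. move=> Hj Hyz. have [T1 T2] := trig_main Hk Hh Hi Hj Hyz.
  rewrite /Rt. have -> : (y != z) = true by apply/eqP. simpl. split.
  - by move/cposbP.
  - move/negbTE/cposbF. exact T2.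
Qed.

Lemma trig_dir (t : Z) : (0 <= t < 4 * Z.of_nat h)%Z ->
  exists F : vtx k -> R, forall y z, y <> z ->
    (Rt t y z -> F y < F z) /\ (~~ Rt t y z -> F z < F y).
Proof. move=> Ht.
  pose ta := if (t + i <? 4 * Z.of_nat h)%Z then (t + i)%Z else (t + i - 4 * Z.of_nat h)%Z.
  have Hta : (0 <= ta < 4 * Z.of_nat h)%Z by rewrite /ta; case: Z.ltb_spec; lia.
  case: (Z.ltb_spec ta (2 * Z.of_nat h)) => Hlt.
  - have Hj : (Z.to_nat ta < 2*h)%N by lia.
    have Et : ridx (Z.of_nat h) i (Z.of_nat (Z.to_nat ta)) = t.
    { rewrite Z2Nat.id; last lia. move: Hlt Hta; rewrite /ridx /ta; repeat (case: Z.ltb_spec => ?); repeat (case: Z.leb_spec => ?); lia. }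
    exists (gg (Z.to_nat ta)) => y z Hyz. rewrite -Et. exact: trig_Rt.
  - have Hj : (Z.to_nat (ta - 2 * Z.of_nat h) < 2*h)%N by lia.
    have Et : ridx (Z.of_nat h) i (Z.of_nat (Z.to_nat (ta - 2 * Z.of_nat h))) = flip (Z.of_nat h) t.
    { rewrite Z2Nat.id; last lia. move: Hlt Hta; rewrite /ridx /ta /flip; repeat (case: Z.ltb_spec => ?); repeat (case: Z.leb_spec => ?); lia. }
    exists (fun v => - gg (Z.to_nat (ta - 2 * Z.of_nat h)) v) => y z Hyz.
    have [T1 T2] := trig_Rt Hj Hyz. rewrite Et Rt_flip // in T1 T2. rewrite negbK in T2.
    split => H; [have := T2 H | have := T1 H]; lra.
Qed.

Lemma telescope (F : vtx k -> R) (r : rel (vtx k)) :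
  (forall y z, r y z -> F y < F z) -> forall x p, path r x p -> p <> [::] -> F x < F (last x p).
Proof. move=> HF x p. elim: p x => [//|z p IH] x /= /andP [H1 H2] _.
  case: p IH H2 => [|w p] IH H2 /=; first exact: HF.
  have := IH z H2 ltac:(done). simpl. have := HF _ _ H1. lra.
Qed.

Lemma span t x p : (0 <= t < 4 * Z.of_nat h)%Z -> path (Rt t) x p -> p <> [::] -> x <> last x p ->
  Rt t x (last x p).
Proof. move=> Ht Hp Hne Hx. have [F HF] := trig_dir Ht.
  have Hr : forall y z, Rt t y z -> F y < F z.
  { move=> y z H. have Hyz : y <> z by move: H; rewrite /Rt => /andP [/eqP ? _].
    exact: (proj1 (HF y z Hyz)). }
  have := telescope Hr Hp Hne. case B: (Rt t x (last x p)) => //.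
  have := proj2 (HF _ _ Hx) ltac:(by rewrite B). lra.
Qed.

Lemma incr_path (j : nat) (E : rel (vtx k)) u p : (j < 2*h)%N -> irreflexive E -> path E u p ->
  strict_incr (map (fun v => gg j v) (u :: p)) -> path (Rt (ridx (Z.of_nat h) i (Z.of_nat j))) u p.
Proof. move=> Hj Hirr. elim: p u => [//|z p IH] u /= /andP [Huz Hp] Hs.
  have Hs' : strict_incr (map (fun v => gg j v) (z :: p)) by case: p IH Hp Hs => [|w p] //= IH Hp [].
  have H1 : gg j u < gg j z by case: p IH Hp Hs {Hs'} => [|w p] /= IH Hp; [case|case].
  rewrite IH // andbT.
  have Hyz : u <> z by move=> E'; rewrite E' Hirr in Huz.
  case B: (Rt _ u z) => //. have := proj2 (trig_Rt Hj Hyz) ltac:(by rewrite B). lra.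
Qed.

Lemma decr_path (j : nat) (E : rel (vtx k)) u p : (j < 2*h)%N -> irreflexive E -> path E u p ->
  strict_decr (map (fun v => gg j v) (u :: p)) ->
  path (Rt (flip (Z.of_nat h) (ridx (Z.of_nat h) i (Z.of_nat j)))) u p.
Proof. move=> Hj Hirr. have Hjz : (0 <= Z.of_nat j < 4 * Z.of_nat h)%Z by lia.
  have Hr := proj1 (@ridx_spec _ _ _ Hi Hjz).
  elim: p u => [//|z p IH] u /= /andP [Huz Hp] Hs.
  have Hs' : strict_decr (map (fun v => gg j v) (z :: p)) by case: p IH Hp Hs => [|w p] //= IH Hp [].
  have H1 : gg j z < gg j u by case: p IH Hp Hs {Hs'} => [|w p] /= IH Hp; [case|case].
  rewrite IH // andbT.
  have Hyz : u <> z by move=> E'; rewrite E' Hirr in Huz.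
  rewrite Rt_flip //. case B: (Rt _ u z) => //. have := proj1 (trig_Rt Hj Hyz) ltac:(by rewrite B). lra.
Qed.

Lemma monoRt (j : nat) (E : rel (vtx k)) u p : (j < k)%N -> irreflexive E -> path E u p ->
  d_monotone (dir k j) (map (@Defs.pos k) (u :: p)) ->
  exists t, (0 <= t < 4 * Z.of_nat h)%Z /\ path (Rt t) u p.
Proof. move=> Hj Hirr Hp [_ Hm]. have Hj' : (j < 2*h)%N by rewrite -Hk.
  have Hjz : (0 <= Z.of_nat j < 4 * Z.of_nat h)%Z by lia.
  have Hr := proj1 (@ridx_spec _ _ _ Hi Hjz).
  rewrite -map_comp in Hm.
  have Ef : (fun p0 : pt => dot p0 (dir k j)) \o (@Defs.pos k) =1 (fun v => gg j v) by [].
  rewrite (eq_map Ef) in Hm.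
  case: Hm => Hm.
  - exists (ridx (Z.of_nat h) i (Z.of_nat j)). split => //. exact: (incr_path Hj').
  - exists (flip (Z.of_nat h) (ridx (Z.of_nat h) i (Z.of_nat j))). split; first exact: (proj1 (@flip_spec _ _ hz1 Hr)).
    exact: (decr_path Hj').
Qed.

End Geom.

End A4m.
Import A4m.

Module A5m.

Section Tree.
Variables (T : finType) (E : rel T).
Hypothesis Esym : symmetric E.
Hypothesis Nocyc : ~ (exists c : seq T, [/\ uniq c, (2 < size c)%N & cycle E c]).

Lemma path_rev_sym x p : path E (last x p) (rev (belast x p)) = path E x p.
Proof. rewrite rev_path. apply: eq_path => a b. by rewrite Esym. Qed.

Lemma tree_head x z b1 r1 b2 r2 :
  simple_path E x z (b1 :: r1) -> simple_path E x z (b2 :: r2) -> b1 = b2.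
Proof.
  move=> [P1 [L1 U1]] [P2 [L2 U2]].
  case: (eqVneq b1 b2) => // Hb. exfalso. apply: Nocyc.
  set p1 := b1 :: r1 in P1 L1 U1 *. set p2 := b2 :: r2 in P2 L2 U2 *.
  have Hz1 : z \in p1 by rewrite -L1 /p1 /= mem_last.
  have Hhas : has (mem p1) p2.
  { apply/hasP. exists z => //. by rewrite -L2 /p2 /= mem_last. }
  have E2 : b2 :: r2 = p2 by []. have E1 : b1 :: r1 = p1 by [].
  move: P2 L2 U2 E2. clearbody p2.
  case: (split_find_nth x Hhas) => y t s2 Hy Ht P2 _ U2 E2.
  have Hy1 : y \in p1 by exact Hy.
  move: P1 U1 E1. clearbody p1.
  case/splitPr: Hy1 Ht Hhas Hz1 L1 => q1 s1 Ht _ _ _ P1 U1 E1.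
  exists (x :: q1 ++ y :: rev t). split.
  -
    have U1' : uniq (x :: q1 ++ [:: y]).
    { move: U1. rewrite -cat1s -(cat1s y s1) !catA cat_uniq. by case/and3P. }
    have U2' : uniq (x :: rcons t y).
    { move: U2. rewrite -cat1s catA cat_uniq. by case/and3P. }
    rewrite -cat1s -(cat1s y (rev t)) catA catA cat_uniq. apply/and3P; split.
    + by rewrite -catA cat1s.
    + apply/hasP => [[w]]. rewrite mem_rev => Hw. rewrite !mem_cat !inE.
      case/orP; [case/orP|].
      * move/eqP => Ew. move: U2'. by rewrite /= -Ew mem_rcons inE Hw orbT.
      * move=> Hq. move/hasP: Ht. apply. exists w => //. change (w \in q1 ++ y :: s1). by rewrite mem_cat Hq.
      * move/eqP => Ew. move/hasP: Ht. apply. exists w => //. change (w \in q1 ++ y :: s1). by rewrite Ew mem_cat inE eqxx orbT.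
    + rewrite rev_uniq. move: U2'. rewrite /= rcons_uniq. by case/and3P.
  - rewrite /= size_cat /= size_rev. case: q1 P1 U1 E1 Ht => [|a q1] P1 U1 E1 Ht; last by rewrite /=; lia.
    case: t P2 U2 Ht E2 => [|c t] P2 U2 Ht E2 /=; last by rewrite /=; lia.
    exfalso. move: Hb. case: E1 => -> _. case: E2 => -> _. by rewrite eqxx.
  -
    rewrite /cycle rcons_cat rcons_cons cat_path. apply/andP; split.
    + move: P1. by rewrite cat_path => /andP [].
    + move: P1. rewrite cat_path => /andP [_ /= /andP [E3 _]]. rewrite /= E3 /=.
      move: P2. rewrite cat_path => /andP [P2 _].
      rewrite -path_rev_sym last_rcons belast_rcons in P2. by rewrite rev_cons in P2.
Qed.


Lemma sp_exists x y : connect E x y -> exists p, simple_path E x y p.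
Proof. case/connectP => p P ->. case: (shortenP P) => p' P' U _. by exists p'. Qed.

Lemma sp_prefix x w p y : simple_path E x w p -> y \in p ->
  exists p', simple_path E x y p' /\ head x p' = head x p /\ {subset p' <= p}.
Proof. move=> [P [L U]] Hy. move: P L U. case/splitPr: Hy => q s P L U.
  exists (rcons q y). split; [split; [|split]|split].
  - move: P. by rewrite -cats1 !cat_path /= andbT => /andP [-> /andP [-> _]].
  - by rewrite last_rcons.
  - move: U. rewrite -cats1 -cat1s -(cat1s y s) !catA cat_uniq. by case/and3P.
  - by case: q {P L U}.
  - move=> z. rewrite mem_rcons !mem_cat !inE. by case/orP => ->; rewrite ?orbT.
Qed.

Lemma sp_heads_disjoint x w w' a ra b rb z :
  simple_path E x w (a :: ra) -> simple_path E x w' (b :: rb) -> a != b ->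
  z \in a :: ra -> z \in b :: rb -> False.
Proof. move=> S1 S2 Hab Z1 Z2.
  have [p1 [T1 [H1 _]]] := sp_prefix S1 Z1. have [p2 [T2 [H2 _]]] := sp_prefix S2 Z2.
  case: p1 T1 H1 => [|a1 r1] T1 H1.
  - by move: T1 => [_ [L U]]; move: U; rewrite /= -L in Z1 *; move: S1 => [_ [_ U1]]; move: U1; rewrite /= Z1.
  case: p2 T2 H2 => [|a2 r2] T2 H2.
  - by move: T2 => [_ [L U]]; move: U; rewrite /= -L in Z2 *; move: S2 => [_ [_ U2]]; move: U2; rewrite /= Z2.
  have := tree_head T1 T2. simpl in H1, H2. rewrite H1 H2 => E'. by rewrite E' eqxx in Hab.
Qed.

Lemma path_concat_split (r : rel T) x a ra pw' :
  path r (last x (a :: ra)) (rev (belast x (a :: ra)) ++ pw') =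
  path (fun y z => r z y) x (a :: ra) && path r x pw'.
Proof. rewrite cat_path rev_path. congr (_ && _).
  by rewrite /= rev_cons last_rcons.
Qed.

Lemma sp_concat x w w' a ra b rb :
  simple_path E x w (a :: ra) -> simple_path E x w' (b :: rb) -> a != b ->
  simple_path E w w' (rev (belast x (a :: ra)) ++ (b :: rb)).
Proof. move=> S1 S2 Hab. have D := sp_heads_disjoint S1 S2 Hab.
  move: (S1) (S2) => [P1 [L1 U1]] [P2 [L2 U2]].
  split; [|split].
  - rewrite -L1 path_concat_split. apply/andP; split => //.
    have Es : (fun y z => E z y) =2 E by move=> u v; rewrite Esym.
    by rewrite (eq_path Es).
  - rewrite last_cat /=. by move: L2 => /=.
  - have -> : w :: rev (belast x (a :: ra)) ++ b :: rb = rev (x :: a :: ra) ++ b :: rb.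
    { by rewrite [x :: a :: ra]lastI L1 rev_rcons. }
    rewrite cat_uniq rev_uniq U1. apply/and3P; split => //.
    + apply/hasP => [[z Z2]]. rewrite mem_rev inE => /orP [/eqP Ez|Z1].
      * move: U2. by rewrite /= -Ez Z2.
      * exact: D Z1 Z2.
    + by case/andP: U2.
Qed.

End Tree.

End A5m.
Import A5m.

Module A6m.

Section Core.
Variables (k h : nat) (E : rel (vtx k)) (x : vtx k).
Hypothesis Hk : k = (2*h)%nat.
Hypothesis Hh : (0 < h)%N.
Hypothesis Hx : (nat_of_ord x < 2*k)%N.
Hypothesis Esym : symmetric E.
Hypothesis Eirr : irreflexive E.
Hypothesis Nocyc : ~ (exists c : seq (vtx k), [/\ uniq c, (2 < size c)%N & cycle E c]).
Let i := Z.of_nat x.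
Let H := Z.of_nat h.
Hypothesis HD : forall u v p, simple_path E u v p ->
  exists t, (0 <= t < 4 * H)%Z /\ path (@Rt k h i t) u p.

Lemma Hi : (0 <= i < 4 * H)%Z. Proof. rewrite /i /H. lia. Qed.
Lemma H1 : (1 <= H)%Z. Proof. rewrite /H. lia. Qed.

Definition Sec (w : vtx k) : Z := @rc k h i x w.
Definition isO (w : vtx k) : bool := ~~ (nat_of_ord w < 2*k)%N.
Definition ri (w : vtx k) : Z := ridx H i (Z.of_nat w).

Lemma ri_range w : ~~ isO w -> (0 <= ri w < 4 * H)%Z.
Proof. rewrite /isO negbK => Hw. apply: (proj1 (ridx_spec H i (Z.of_nat w) Hi _)). rewrite /H. lia. Qed.

Lemma ri_x : ri x = 0%Z.
Proof. rewrite /ri /ridx -/i. case: Z.leb_spec; lia. Qed.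

Lemma ri_inj w w' : ~~ isO w -> ~~ isO w' -> ri w = ri w' -> w = w'.
Proof. rewrite /isO !negbK => Hw Hw' E'. apply: val_inj => /=.
  case: (Z.eq_dec (Z.of_nat w) (Z.of_nat w')) => [/Nat2Z.inj //|Hne].
  exfalso. apply: (@ridx_inj H i (Z.of_nat w) (Z.of_nat w')) => //; try (rewrite /H; lia).
Qed.

Lemma ri_x_iff w : ~~ isO w -> (ri w = 0%Z <-> w = x).
Proof. move=> Hw. split; last by move=> ->; exact ri_x.
  move=> E'. apply: ri_inj => //. by rewrite /isO negbK. by rewrite E' ri_x. Qed.

Lemma vcode_poly w : ~~ isO w -> vcode w = Some (Z.of_nat w).
Proof. by rewrite /isO negbK /vcode => ->. Qed.
Lemma vcode_o w : isO w -> vcode w = None.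
Proof. by rewrite /isO /vcode => /negbTE ->. Qed.

Lemma rcPP y z : ~~ isO y -> ~~ isO z -> @rc k h i y z = cellPP H (ri y) (ri z).
Proof. move=> Hy Hz. by rewrite /rc (vcode_poly Hy) (vcode_poly Hz). Qed.
Lemma rcPO y z : ~~ isO y -> isO z -> @rc k h i y z = cellPO H (ri y).
Proof. move=> Hy Hz. by rewrite /rc (vcode_poly Hy) (vcode_o Hz). Qed.
Lemma rcOP y z : isO y -> ~~ isO z -> @rc k h i y z = ri z.
Proof. move=> Hy Hz. by rewrite /rc (vcode_o Hy) (vcode_poly Hz). Qed.

Lemma x_notO : ~~ isO x. Proof. by rewrite /isO negbK. Qed.

Lemma S_poly w : ~~ isO w -> w <> x -> Sec w = (H + (ri w + 1) / 2)%Z /\ (1 <= ri w < 4 * H)%Z.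
Proof. move=> Hw Hwx. have R := ri_range Hw.
  have R0 : ri w <> 0%Z by move/(ri_x_iff Hw).
  rewrite /Sec rcPP ?x_notO // ri_x. split; last lia.
  have [m [Hm ->]] := @cellPP_spec H 0 (ri w) H1 ltac:(lia) ltac:(lia) ltac:(lia).
  move: Hm. case: Z.ltb_spec => // Hlt Hm; last lia.
  have -> : ((0 + ri w + 1)/2 = m)%Z by symmetry; apply: (Z.div_unique_pos _ _ _ (0 + ri w + 1 - 2*m)); lia.
  case: Z.leb_spec => //; lia.
Qed.

Lemma S_o w : isO w -> Sec w = (2 * H)%Z.
Proof. move=> Hw. rewrite /Sec rcPO ?x_notO // ri_x /cellPO. case: Z.ltb_spec; rewrite /H; lia. Qed.

Lemma S_range w : w <> x -> (H + 1 <= Sec w <= 3 * H)%Z.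
Proof. move=> Hwx. case Hw: (isO w).
  - rewrite S_o //. have := H1. lia.
  - have [-> R] := S_poly (negbT Hw) Hwx.
    have : (2 * ((ri w + 1)/2) <= ri w + 1 < 2 * ((ri w + 1)/2) + 2)%Z by Z.div_mod_to_equations; lia.
    lia.
Qed.

Lemma Rt_cpos t y z : @Rt k h i t y z -> cposP H (@rc k h i y z) t.
Proof. by case/andP => _ /cposbP. Qed.

Lemma sep w w' a ra b rb :
  simple_path E x w (a :: ra) -> simple_path E x w' (b :: rb) -> a != b ->
  exists t, (0 <= t < 4 * H)%Z /\
    cposP H (Sec w') t /\ cposP H (Sec b) t /\ ~ cposP H (Sec w) t /\ ~ cposP H (Sec a) t.
Proof. move=> S1 S2 Hab.
  have SC := sp_concat Esym Nocyc S1 S2 Hab.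
  have [t [Ht Pt]] := HD SC.
  move: (S1) (S2) => [P1 [L1 U1]] [P2 [L2 U2]].
  rewrite -L1 path_concat_split in Pt. case/andP: Pt => Pa Pb.
  have Hf := @flip_spec _ _ H1 Ht.
  have Es : (fun y z => @Rt k h i t z y) =2 @Rt k h i (flip H t).
  { move=> y z. exact: (Rt_rev Hk Hh Hi). }
  rewrite (eq_path Es) in Pa.
  have nx : forall (c : vtx k) r, uniq (x :: c :: r) -> x <> last c r.
  { move=> c r U E'. move: U => /= /andP [U _]. move: U. by rewrite E' mem_last. }
  have nh : forall (c : vtx k) r, uniq (x :: c :: r) -> c <> x.
  { move=> c r U E'. move: U => /= /andP [U _]. move: U. by rewrite E' inE eqxx. }
  exists t. split => //. split; [|split; [|split]].
  - have := span Hk Hh Hi Ht Pb ltac:(done) (nx _ _ U2). rewrite L2. exact: Rt_cpos.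
  - move: Pb => /= /andP [Hb _]. exact: Rt_cpos.
  - have Hw : w <> x by move=> E'; apply: (nx _ _ U1); rewrite /= in L1; rewrite L1.
    have R := rc_range Hk Hh Hi (nesym Hw).
    apply (proj2 Hf _ R). have := span Hk Hh Hi (proj1 Hf) Pa ltac:(done) (nx _ _ U1). rewrite L1. exact: Rt_cpos.
  - have Ha : a <> x := nh _ _ U1.
    have R := rc_range Hk Hh Hi (nesym Ha).
    apply (proj2 Hf _ R). move: Pa => /= /andP [Ha' _]. exact: Rt_cpos.
Qed.


Lemma sep_path w w' a ra b rb :
  simple_path E x w (a :: ra) -> simple_path E x w' (b :: rb) -> a != b ->
  exists t, (0 <= t < 4 * H)%Z /\ path (@Rt k h i t) x (b :: rb) /\ ~ cposP H (Sec w) t.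
Proof. move=> S1 S2 Hab.
  have SC := sp_concat Esym Nocyc S1 S2 Hab.
  have [t [Ht Pt]] := HD SC.
  move: (S1) (S2) => [P1 [L1 U1]] [P2 [L2 U2]].
  rewrite -L1 path_concat_split in Pt. case/andP: Pt => Pa Pb.
  have Hf := @flip_spec _ _ H1 Ht.
  have Es : (fun y z => @Rt k h i t z y) =2 @Rt k h i (flip H t).
  { move=> y z. exact: (Rt_rev Hk Hh Hi). }
  rewrite (eq_path Es) in Pa.
  have nx : forall (c : vtx k) r, uniq (x :: c :: r) -> x <> last c r.
  { move=> c r U E'. move: U => /= /andP [U _]. move: U. by rewrite E' mem_last. }
  exists t. split => //. split => //.
  have Hw : w <> x by move=> E'; apply: (nx _ _ U1); rewrite /= in L1; rewrite L1.
  have R := rc_range Hk Hh Hi (nesym Hw).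
  apply (proj2 Hf _ R). have := span Hk Hh Hi (proj1 Hf) Pa ltac:(done) (nx _ _ U1). rewrite L1. exact: Rt_cpos.
Qed.

Hypothesis Econn : forall u v, connect E u v.

Definition inB (b w : vtx k) : Prop := exists r, simple_path E x w (b :: r).

Lemma notB_path b w : w <> x -> ~ inB b w -> exists c r, simple_path E x w (c :: r) /\ c != b.
Proof. move=> Hw NB. have [p Sp] := sp_exists (Econn x w).
  case: p Sp => [|c r] Sp; first by move: Sp => [_ [L _]]; exfalso; apply Hw; rewrite -L.
  exists c, r. split => //. apply/eqP => E'. apply: NB. exists r. by rewrite -E'.
Qed.

Lemma nb_path a : E x a -> simple_path E x a [:: a].
Proof. move=> Ha. split; [|split] => //=. by rewrite Ha. rewrite inE andbT.
  apply/eqP => E'. by rewrite E' Eirr in Ha. Qed.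

Lemma ne_x_of_path w c r : simple_path E x w (c :: r) -> w <> x /\ c <> x.
Proof. move=> [_ [L U]]. move: U => /= /andP [U _]. split.
  - move=> E'. move: U. by rewrite -E' -L /= mem_last.
  - move=> E'. move: U. by rewrite E' inE eqxx.
Qed.

Lemma pred_cases b w r : simple_path E x w (b :: r) ->
  w = b \/ exists y, y <> x /\ y <> w /\ inB b y /\
     (forall t, path (@Rt k h i t) x (b :: r) -> @Rt k h i t y w).
Proof. move=> Sp. move: (Sp) => [P [L U]].
  case/lastP: r Sp P L U => [|r' z] Sp P L U; first by left; rewrite -L.
  right. rewrite /= last_rcons in L. subst z.
  have Hy : last b r' \in b :: rcons r' w by rewrite -cat1s -rcons_cat mem_rcons inE mem_last orbT.
  have [p' [Sp' [Hd _]]] := sp_prefix Sp Hy.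
  have Hyx : last b r' <> x.
  { move=> E'. move: U => /= /andP [U _]. move: U. by rewrite -E' -cat1s -rcons_cat mem_rcons inE mem_last orbT. }
  exists (last b r'). split; [|split; [|split]].
  - exact Hyx.
  - move=> E'. move: U. rewrite cons_uniq => /andP [_]. rewrite -rcons_cons rcons_uniq => /andP [U _].
    move: U. by rewrite -{1}E' mem_last.
  - case: p' Sp' Hd => [|c r2] Sp' Hd; first by move: Sp' => [_ [L' _]]; exfalso; apply: Hyx; rewrite -L'.
    simpl in Hd. subst c. by exists r2.
  - move=> t Pt. move: Pt. rewrite -rcons_cons rcons_path => /andP [_]. by [].
Qed.

Lemma ex_min (P : vtx k -> Prop) (f : vtx k -> Z) : (exists w, P w) -> (forall w, P w -> (0 <= f w)%Z) ->
  exists w, P w /\ forall w', P w' -> (f w <= f w')%Z.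
Proof. move=> [w0 P0] Hpos.
  suff: forall n (w : vtx k), P w -> (Z.to_nat (f w) <= n)%coq_nat -> exists w, P w /\ forall w', P w' -> (f w <= f w')%Z.
  { move=> Hs. exact: (Hs _ w0 P0 (le_n _)). }
  elim=> [|n IH] w Pw Hn.
  - exists w. split => // w' Pw'. have := Hpos _ Pw. have := Hpos _ Pw'. lia.
  - case: (classic (exists w', P w' /\ (f w' < f w)%Z)) => [[w' [Pw' Hlt]]|NE].
    + apply: (IH w' Pw'). have := Hpos _ Pw'. lia.
    + exists w. split => // w' Pw'. case: (Z.le_gt_cases (f w) (f w')) => // Hlt. exfalso. apply: NE. by exists w'.
Qed.

Lemma mk_vertex (r : Z) : (1 <= r < 4 * H)%Z -> exists w, ~~ isO w /\ w <> x /\ ri w = r.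
Proof. move=> Hr.
  pose p := if (r + i <? 4 * H)%Z then (r + i)%Z else (r + i - 4 * H)%Z.
  have Hp : (0 <= p < 4 * H)%Z by rewrite /p; case: Z.ltb_spec; lia.
  have Hpn : (Z.to_nat p < (2*k).+1)%N by rewrite /H in Hp; lia.
  exists (Ordinal Hpn).
  have Ho : ~~ isO (Ordinal Hpn) by rewrite /isO negbK /=; rewrite /H in Hp; lia.
  have Hri : ri (Ordinal Hpn) = r.
  { rewrite /ri /=. rewrite Z2Nat.id; last lia. rewrite /ridx /p.
    move: Hr Hp. rewrite /p. repeat (case: Z.ltb_spec => ?); repeat (case: Z.leb_spec => ?); lia. }
  split => //. split => //. move=> E'. have := ri_x. rewrite -E' Hri. lia.
Qed.

Lemma core (a b c : vtx k) : E x a -> E x b -> E x c -> (Sec a < Sec b < Sec c)%Z -> False.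
Proof. move=> Ea Eb Ec Habc.
  have Sa := nb_path Ea. have Sb := nb_path Eb. have Sc := nb_path Ec.
  have Hax : a <> x by move=> E'; rewrite E' Eirr in Ea.
  have Hbx : b <> x by move=> E'; rewrite E' Eirr in Eb.
  have Hcx : c <> x by move=> E'; rewrite E' Eirr in Ec.
  have Rb := S_range Hbx. have Ra := S_range Hax. have Rc := S_range Hcx.
  have Hab : a != b by apply/eqP => E'; rewrite E' in Habc; lia.
  have Hba : b != a by rewrite eq_sym.
  have Hcb : c != b by apply/eqP => E'; rewrite E' in Habc; lia.
  have Hbc : b != c by rewrite eq_sym.
  have BB : inB b b by exists [::].
  have HposS : forall w, inB b w -> (0 <= Sec w)%Z.
  { move=> w [r Sp]. have [Hw _] := ne_x_of_path Sp. have := S_range Hw. have := H1. lia. }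
  have [wlo [[rlo Slo] Hlo]] := ex_min (ex_intro _ b BB) HposS.
  have [whi [[rhi Shi] Hhi]] := ex_min (f := fun w => 3 * H - Sec w)%Z (ex_intro _ b BB)
     ltac:(move=> w [r Sp]; have [Hw _] := ne_x_of_path Sp; have := S_range Hw; lia).
  set mlo := Sec wlo in Hlo *. set mhi := Sec whi in Hhi *.
  have Hlob : (mlo <= Sec b)%Z := Hlo _ BB.
  have Hhib : (Sec b <= mhi)%Z by have := Hhi _ BB; lia.
  have [Hwlo _] := ne_x_of_path Slo. have [Hwhi _] := ne_x_of_path Shi.
  have Rlo := S_range Hwlo. have Rhi := S_range Hwhi.
  have Halo : (Sec a < mlo)%Z.
  { have [t [Ht [C1 [C2 [C3 C4]]]]] := sep Sa Slo Hab.
    have := @AL1 _ _ _ _ _ _ H1 Rlo Rb Ra Ra Ht C1 C2 C3 C4. clear -Habc; lia. }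
  have Hchi : (mhi < Sec c)%Z.
  { have [t [Ht [C1 [C2 [C3 C4]]]]] := sep Sc Shi Hcb.
    have := @AL1 _ _ _ _ _ _ H1 Rhi Rb Rc Rc Ht C1 C2 C3 C4. clear -Habc; lia. }
  have B1 : (H + 2 <= mlo)%Z by clear -Halo Ra; lia.
  have B2 : (mhi <= 3*H - 1)%Z by clear -Hchi Rc; lia.
  have B3 : (mlo <= mhi)%Z by clear -Hlob Hhib; lia.
  have InB : forall y, y <> x -> (mlo <= Sec y <= mhi)%Z -> inB b y.
  { move=> y Hy Hr. case: (classic (inB b y)) => // NB.
    have [c' [r' [Sy Hc']]] := notB_path Hy NB.
    have [Hyx Hc'x] := ne_x_of_path Sy. have Ry := S_range Hyx. have Rc' := S_range Hc'x.
    have [t [Ht [C1 [C2 [C3 C4]]]]] := sep Sy Slo Hc'.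
    have A1' := @AL1 _ _ _ _ _ _ H1 Rlo Rb Ry Rc' Ht C1 C2 C3 C4.
    have [t' [Ht' [D1 [D2 [D3 D4]]]]] := sep Sy Shi Hc'.
    have A2' := @AL1 _ _ _ _ _ _ H1 Rhi Rb Ry Rc' Ht' D1 D2 D3 D4. clear -A1' A2' Hr Hlob Hhib; lia. }
  have [u [Hu1 [Hu2 Hu3]]] := mk_vertex (r := (2 * (mlo - 1 - H) - 1)%Z) ltac:(clear -B1 B2 B3; lia).
  have [v [Hv1 [Hv2 Hv3]]] := mk_vertex (r := (2 * (mhi + 1 - H) - 1)%Z) ltac:(clear -B1 B2 B3; lia).
  have Su : Sec u = (mlo - 1)%Z.
  { have [-> _] := S_poly Hu1 Hu2. rewrite Hu3.
    have -> : ((2 * (mlo - 1 - H) - 1 + 1) / 2 = mlo - 1 - H)%Z.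
    { have -> : (2 * (mlo - 1 - H) - 1 + 1 = (mlo - 1 - H) * 2)%Z by ring. apply: Z.div_mul. clear -B1; lia. }
    clear -B1; lia. }
  have Sv : Sec v = (mhi + 1)%Z.
  { have [-> _] := S_poly Hv1 Hv2. rewrite Hv3.
    have -> : ((2 * (mhi + 1 - H) - 1 + 1) / 2 = mhi + 1 - H)%Z.
    { have -> : (2 * (mhi + 1 - H) - 1 + 1 = (mhi + 1 - H) * 2)%Z by ring. apply: Z.div_mul. clear -B2 B1 B3; lia. }
    clear; lia. }
  have uB : ~ inB b u by move=> Bu; have := Hlo _ Bu; rewrite Su; clear; lia.
  have vB : ~ inB b v by move=> Bv; have := Hhi _ Bv; rewrite Sv; clear; lia.
  have [cu [ru [Su' Hcu]]] := notB_path Hu2 uB.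
  have [cv [rv [Sv' Hcv]]] := notB_path Hv2 vB.
  have Edge : forall w r y, simple_path E x w (b :: r) -> y <> w ->
      (forall t, path (@Rt k h i t) x (b :: r) -> @Rt k h i t y w) ->
      (mlo <= rc h i y w <= mhi)%Z.
  { move=> w r y Sp Hyw Hpath.
    have [t [Ht [Pt Nt]]] := sep_path Su' Sp Hcu.
    have [t' [Ht' [Pt' Nt']]] := sep_path Sv' Sp Hcv.
    rewrite Su in Nt. rewrite Sv in Nt'.
    have Cb : cposP H (Sec b) t by move: Pt => /= /andP [/Rt_cpos ? _].
    have Cb' : cposP H (Sec b) t' by move: Pt' => /= /andP [/Rt_cpos ? _].
    have Ce := Rt_cpos (Hpath _ Pt). have Ce' := Rt_cpos (Hpath _ Pt').
    have Rr := rc_range Hk Hh Hi Hyw.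
    exact: (@AL2 H mlo mhi (Sec b) _ t t' H1 B1 (conj Hlob Hhib) B2 Rr Ht Ht' Nt Cb Ce Nt' Cb' Ce'). }
  have [w1 [W11 [W12 W13]]] := mk_vertex (r := (2 * (mlo - H) - 1)%Z) ltac:(clear -B1 B2 B3; lia).
  have [w2 [W21 [W22 W23]]] := mk_vertex (r := (2 * (mhi - H))%Z) ltac:(clear -B1 B2 B3; lia).
  have S1 : Sec w1 = mlo.
  { have [-> _] := S_poly W11 W12. rewrite W13.
    have -> : ((2 * (mlo - H) - 1 + 1) / 2 = mlo - H)%Z.
    { have -> : (2 * (mlo - H) - 1 + 1 = (mlo - H) * 2)%Z by ring. apply: Z.div_mul. clear -B1; lia. }
    clear; lia. }
  have S2 : Sec w2 = mhi.
  { have [-> _] := S_poly W21 W22. rewrite W23.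
    have [m [Hm ->]] := half_spec (2 * (mhi - H)). clear -Hm; lia. }
  have [r1 Sp1] := InB w1 W12 ltac:(rewrite S1; clear -B3; lia).
  have [r2 Sp2] := InB w2 W22 ltac:(rewrite S2; clear -B3; lia).
  have SyB : forall y, y <> x -> inB b y -> (mlo <= Sec y <= mhi)%Z.
  { move=> y Hy By. split; [exact: Hlo|have := Hhi _ By; clear; lia]. }
  have Hw1b : w1 = b.
  { case: (pred_cases Sp1) => // [[y [Hyx [Hyw [By Hp]]]]].
    exfalso. have Eb1 := Edge _ _ _ Sp1 Hyw Hp. have Sy := SyB _ Hyx By.
    case Hyo: (isO y).
    - rewrite rcOP // W13 in Eb1. rewrite S_o // in Sy. clear -Eb1 Sy; lia.
    - have Hyo' : ~~ isO y by rewrite Hyo.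
      rewrite rcPP // W13 in Eb1. have [Sy' Ry] := S_poly Hyo' Hyx. rewrite Sy' in Sy.
      apply: (@AL3 H mlo mhi (ri y) H1 (conj B1 B3) B2 Ry _ Sy Eb1).
      move=> E'. apply: Hyw. apply: ri_inj => //. by rewrite E' W13. }
  case: (pred_cases Sp2) => [Hw2b|[y [Hyx [Hyw [By Hp]]]]].
  - have : ri w1 = ri w2 by rewrite Hw1b Hw2b. rewrite W13 W23. move=> E'; clear -E'; lia.
  - have Eb2 := Edge _ _ _ Sp2 Hyw Hp. have Sy := SyB _ Hyx By.
    case Hyo: (isO y).
    + rewrite rcOP // W23 in Eb2. rewrite S_o // in Sy.
      case: By => ro Spo.
      case: (pred_cases Spo) => [Hob|[y' [Hy'x [Hy'o [By' Hp']]]]].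
      * move: W11. by rewrite Hw1b -Hob Hyo.
      * have Eb3 := Edge _ _ _ Spo Hy'o Hp'. have Sy' := SyB _ Hy'x By'.
        case Hy'O: (isO y').
        -- apply: Hy'o. apply: vtx_o_eq; [exact: Hy'O | exact: Hyo].
        -- have Hy'O' : ~~ isO y' by rewrite Hy'O.
           rewrite rcPO // in Eb3. have [Sy'' Ry'] := S_poly Hy'O' Hy'x. rewrite Sy'' in Sy'.
           have B4 : (mhi <= 2 * H)%Z by clear -Eb2; lia.
           exact: (@AL6 H mlo mhi (ri y') H1 (conj B1 B3) B4 Ry' Sy' Eb3).
    + have Hyo' : ~~ isO y by rewrite Hyo.
      rewrite rcPP // W23 in Eb2. have [Sy' Ry] := S_poly Hyo' Hyx. rewrite Sy' in Sy.
      apply: (@AL5 H mlo mhi (ri y) H1 (conj B1 B3) B2 Ry _ Sy Eb2).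
      move=> E'. apply: Hyw. apply: ri_inj => //. by rewrite E' W23.
Qed.

End Core.

End A6m.
Import A6m.


Theorem lemma12 (k : nat) (hk : (2 <= k)%N) (hev : ~~ odd k)
  (E : rel (vtx k)) (hmin : min_D_monotone_tree E)
  (x : vtx k) (hx : (nat_of_ord x < 2 * k)%N) :
  (degree E x <= 2)%N.
Proof.
  case: hmin => [[[Esym [Eirr [Econn Nocyc]]] Hmono] _].
  set h := k./2.
  have Hk : k = (2 * h)%nat.
  { have E2 := even_halfK hev. rewrite /h. rewrite -[in LHS]E2. by rewrite -mul2n. }
  have Hh : (0 < h)%N by lia.
  have Hi : (0 <= Z.of_nat x < 4 * Z.of_nat h)%Z by lia.
  have HD : forall u v p, simple_path E u v p ->
      exists t, (0 <= t < 4 * Z.of_nat h)%Z /\ path (Rt h (Z.of_nat x) t) u p.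
  { move=> u v p Sp. have [j [Hj Hall]] := Hmono u v.
    have Dm := Hall p Sp. case: Sp => [P _].
    exact: (monoRt Hk Hh Hi Hj Eirr P Dm). }
  rewrite leqNgt. apply/negP => /card_gt2P [a [b [c [[Ha Hb Hc] [Hab Hbc Hca]]]]].
  rewrite !inE in Ha Hb Hc.
  have Hsep : forall a b, E x a -> E x b -> a != b -> Sec h x a <> Sec h x b.
  { move=> a' b' Ha' Hb' Hab'.
    have [t [Ht [C1 [C2 [C3 C4]]]]] := sep Hk Hh hx Esym Nocyc HD (nb_path Eirr Ha') (nb_path Eirr Hb') Hab'.
    move=> E'. apply: C3. by rewrite E'. }
  have Cr := core Hk Hh hx Esym Eirr Nocyc HD Econn.
  have Sab := Hsep _ _ Ha Hb Hab. have Sbc := Hsep _ _ Hb Hc Hbc. have Sca := Hsep _ _ Hc Ha Hca.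
  set sa := Sec h x a in Sab Sca. set sb := Sec h x b in Sab Sbc. set sc := Sec h x c in Sbc Sca.
  case: (Z.lt_total sa sb) => [ab|[ab|ab]]; try done;
  case: (Z.lt_total sb sc) => [bc|[bc|bc]]; try done;
  case: (Z.lt_total sa sc) => [ac|[ac|ac]]; try done.
  all: first [ exact: (Cr a b c Ha Hb Hc (conj ab bc))
             | exact: (Cr a c b Ha Hc Hb (conj ac bc))
             | exact: (Cr c a b Hc Ha Hb (conj ac ab))
             | exact: (Cr b a c Hb Ha Hc (conj ab ac))
             | exact: (Cr b c a Hb Hc Ha (conj bc ac))
             | exact: (Cr c b a Hc Hb Ha (conj bc ab))
             | (clear -ab bc ac Sab Sbc Sca; lia) ].
Qed.
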